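(* Let $n\in\mathbb N$ with $n\ge 10$ and let $T_n$ be a tree on $n$ vertices with $\Delta(T_n)=n-4$. Suppose that for every integer $m\ge n$ and every connected graph $H\in\mathrm{Ex}(m;T_n)$ we have $\Delta(H)\le n-4$. Let $p=k(n-1)+r\ge n-1$ with $k\in\mathbb N$ and $r\in\{0,1,\ldots,n-2\}$. Then $$\frac{(n-2)p-r(n-1-r)}2\le\mathrm{ex}(p;T_n)\le\frac{(n-2)p}2-\min\Big\{n-1+r,\ \frac{r(n-1-r)}2\Big\}.$$ Consequently, for $r\in\{0,1,2,n-5,n-4,n-3,n-2\}$ we have $\mathrm{ex}(p;T_n)=\frac{(n-2)p-r(n-1-r)}2$.
   Context: All graphs are finite simple graphs; $\Delta(G)$ is the maximum degree of $G$. For a graph $L$, $\mathrm{ex}(p;L)$ is the maximum number of edges in a graph on $p$ vertices containing no subgraph isomorphic to $L$, and $\mathrm{Ex}(p;L)$ is the set of graphs on $p$ vertices containing no copy of $L$ and having exactly $\mathrm{ex}(p;L)$ edges. *)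

(* Defs.v *)
(* A finite simple graph on a finite vertex type V is
   represented by its edge set E : {set {set V}}, every edge being a
   2-element subset of V. *)
From HB Require Import structures.
From mathcomp Require Import all_boot all_order all_algebra.
Set Implicit Arguments. Unset Strict Implicit. Unset Printing Implicit Defensive.
Import Order.TTheory GRing.Theory Num.Theory.

Section Graphs.
Variable V : finType.

Definition is_graph (E : {set {set V}}) : bool := [forall e in E, #|e| == 2].

Definition adj (E : {set {set V}}) : rel V := fun x y => (x != y) && ([set x; y] \in E).

Definition deg (E : {set {set V}}) (x : V) : nat := #|[set y | adj E x y]|.

Definition maxdeg (E : {set {set V}}) : nat := \max_(x : V) deg E x.

Definition connected (E : {set {set V}}) : bool :=
  [forall x, forall y, connect (adj E) x y].

Definition acyclic (E : {set {set V}}) : Prop :=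
  forall s : seq V, 2 < size s -> uniq s -> ~~ cycle (adj E) s.

Definition is_tree (E : {set {set V}}) : Prop := connected E /\ acyclic E.
End Graphs.

Definition contains (U W : finType) (L : {set {set U}}) (G : {set {set W}}) : bool :=
  [exists f : {ffun U -> W},
     injectiveb f && [forall x, forall y, adj L x y ==> adj G (f x) (f y)]].

Definition ex (U : finType) (p : nat) (L : {set {set U}}) : nat :=
  \max_(E : {set {set 'I_p}} | is_graph E && ~~ contains L E) #|E|.

Definition in_Ex (U : finType) (p : nat) (L : {set {set U}}) (E : {set {set 'I_p}}) : bool :=
  [&& is_graph E, ~~ contains L E & #|E| == ex p L].

(* Main.v *)
Require Import Defs.
From HB Require Import structures.
From mathcomp Require Import all_boot all_order all_algebra.
From mathcomp Require Import zify.
Import Order.TTheory GRing.Theory Num.Theory.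
Set Implicit Arguments. Unset Strict Implicit. Unset Printing Implicit Defensive.


Section G.
Variable V : finType.
Implicit Types (E : {set {set V}}) (x y : V).

Lemma adjC E x y : adj E x y = adj E y x.
Proof. by rewrite /adj eq_sym setUC. Qed.

Lemma connect_symE E : connect_sym (adj E).
Proof. by apply: sym_connect_sym => x y; exact: adjC. Qed.

Definition comp E x := [set y | connect (adj E) x y].

Lemma comp_refl E x : x \in comp E x.
Proof. by rewrite inE connect0. Qed.

Lemma comp_eq E x y : y \in comp E x -> comp E y = comp E x.
Proof.
rewrite inE => cxy; apply/setP=> z; rewrite !inE.
apply/idP/idP => h; first exact: connect_trans cxy h.
rewrite connect_symE in cxy; exact: connect_trans cxy h.
Qed.

Lemma comp_adj E x u v : u \in comp E x -> adj E u v -> v \in comp E x.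
Proof. rewrite !inE => h a; exact: connect_trans h (connect1 a). Qed.

Lemma deg_edges E x : is_graph E -> deg E x = #|[set e in E | x \in e]|.
Proof.
move=> gE; rewrite /deg -(card_imset _ (f:=fun y => [set x; y])); last first.
  move=> y y' /= h.
  have: y \in [set x; y'] by rewrite -h !inE eqxx orbT.
  rewrite !inE => /orP[/eqP yx|/eqP //].
  have: y' \in [set x; y] by rewrite h !inE eqxx orbT.
  by rewrite !inE yx orbb => /eqP ->.
apply: eq_card => e; rewrite !inE; apply/imsetP/andP.
- case=> y; rewrite inE /adj => /andP[xy ein] ->; split=> //; by rewrite !inE eqxx.
- case=> ein xe; move/forall_inP: gE => /(_ e ein) /cards2P [a [b [ab eab]]].
  move: xe; rewrite eab !inE => /orP[/eqP->|/eqP->].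
  + by exists b; rewrite // inE /adj ab -eab ein.
  + exists a; last by rewrite setUC.
    by rewrite inE /adj eq_sym ab setUC -eab ein.
Qed.

Lemma card_sum (T : finType) (A : {set T}) (P : pred T) :
  #|[set e in A | P e]| = \sum_(e in A) (P e : nat).
Proof.
rewrite -sum1_card (eq_bigl (fun e => (e \in A) && P e)); last by move=> e; rewrite inE.
rewrite big_mkcondr /=; apply: eq_bigr => e _; by case: (P e).
Qed.

Lemma handshake E : is_graph E -> \sum_x deg E x = 2 * #|E|.
Proof.
move=> gE.
under eq_bigr => x _ do rewrite deg_edges // card_sum.
rewrite exchange_big /=.
rewrite (eq_bigr (fun _ => 2)); first by rewrite sum_nat_const mulnC.
move=> e eE; move/forall_inP: gE => /(_ e eE) /eqP <-.
rewrite -sum1_card [RHS]big_mkcond; apply: eq_bigr => y _; by case: (y \in e).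
Qed.

Lemma keyg N t a : t < N -> 0 < a <= N ->
  ((t + a) %% N) * (N - (t + a) %% N) <= t * (N - t) + a * (N - a).
Proof.
move=> tN /andP[a0 aN]; case: (ltnP (t+a) N) => h.
  rewrite modn_small //. nia.
have e : (t + a) %% N = t + a - N.
  by rewrite -{1}(subnKC h) modnDl modn_small //; lia.
rewrite e; nia.
Qed.

Definition dd N m := if m <= N then N - m else 2.

Lemma comp_sum N E (S : {set V}) : 0 < N ->
  (forall x y, x \in S -> y \in comp E x -> y \in S) ->
  exists L, [/\ (L == 0) || (N < L), L <= #|S| &
    ((#|S| - L) %% N) * (N - (#|S| - L) %% N) + 2 * L <= \sum_(x in S) dd N #|comp E x|].
Proof.
move=> N0; have [K] := ubnP #|S|; elim: K S => // K IH S ltS clS.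
case: (set_0Vmem S) => [->|[x xS]].
  by exists 0; rewrite cards0 mod0n big_set0.
set C := comp E x.
have CS : C \subset S by apply/subsetP => y; apply: clS.
set S' := S :\: C.
have clS' : forall u v, u \in S' -> v \in comp E u -> v \in S'.
  move=> u v; rewrite !in_setD => /andP[uC uS] vu; rewrite (clS u v uS vu) andbT.
  apply: contra uC => vC; rewrite /C -(comp_eq vC) (comp_eq vu); exact: comp_refl.
have cardS : #|S| = #|S'| + #|C|.
  by rewrite -(cardsID C S) addnC (setIidPr CS).
have xC : x \in C := comp_refl E x.
have a0 : 0 < #|C| by apply/card_gt0P; exists x.
have ltS' : #|S'| < K by move: ltS; rewrite cardS; lia.
have [L [L0 LS' HL]] := IH S' ltS' clS'.
have sumS : \sum_(y in S) dd N #|comp E y| =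
   \sum_(y in S') dd N #|comp E y| + #|C| * dd N #|C|.
  rewrite (big_setID C) /= (setIidPr CS) addnC; congr (_ + _).
  rewrite -sum_nat_const; apply: eq_bigr => y yC; by rewrite (comp_eq yC).
rewrite sumS cardS.
case: (leqP #|C| N) => aN.
  exists L; split => //; first lia.
  have e : #|S'| + #|C| - L = (#|S'| - L) + #|C| by lia.
  rewrite e -modnDml.
  have := keyg (t := (#|S'| - L) %% N) (a := #|C|) (ltn_pmod _ N0).
  have ddC : dd N #|C| = N - #|C| by rewrite /dd aN.
  rewrite a0 aN ddC => /(_ isT) H1.
  apply: (leq_trans (leq_add H1 (leqnn _))); rewrite addnAC; exact: leq_add HL (leqnn _).
exists (L + #|C|); split; first lia. lia.
have e : #|S'| + #|C| - (L + #|C|) = #|S'| - L by lia.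
have ddC : dd N #|C| = 2 by rewrite /dd leqNgt aN.
rewrite e ddC mulnDr addnA (mulnC #|C| 2); exact: leq_add HL (leqnn _).
Qed.
End G.

Definition pull (U W : finType) (h : U -> W) (G : {set {set W}}) : {set {set U}} :=
  [set e : {set U} | h @: e \in G].

Lemma adj_pull (U W : finType) (h : U -> W) G a b :
  injective h -> adj (pull h G) a b = adj G (h a) (h b).
Proof. by move=> ih; rewrite /adj inE imsetU1 imset_set1 (inj_eq ih). Qed.

Lemma graph_pull (U W : finType) (h : U -> W) G :
  injective h -> is_graph G -> is_graph (pull h G).
Proof.
move=> ih /forall_inP gG; apply/forall_inP => e; rewrite inE => /gG.
by rewrite card_imset.
Qed.

Lemma contains_comp (U W X : finType) (L : {set {set U}}) (G : {set {set W}})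
  (G' : {set {set X}}) (h : W -> X) :
  injective h -> (forall a b, adj G a b -> adj G' (h a) (h b)) ->
  contains L G -> contains L G'.
Proof.
move=> ih hadj /existsP[f /andP[/injectiveP fi /forallP fa]].
apply/existsP; exists [ffun x => h (f x)]; apply/andP; split.
  apply/injectiveP => x y; rewrite !ffunE => /ih; exact: fi.
apply/forallP=> x; apply/forallP=> y; apply/implyP=> a; rewrite !ffunE; apply: hadj.
by have /forallP/(_ y)/implyP := fa x; apply.
Qed.

Lemma disjointP (U : finType) (A B : {set U}) :
  reflect (forall x, x \in A -> x \in B -> False) [disjoint A & B].
Proof.
rewrite -setI_eq0; apply: (iffP eqP) => [h x xa xb|h].
  have: x \in A :&: B by rewrite inE xa xb.
  by rewrite h inE.
apply/setP => x; rewrite !inE; apply/negbTE/negP => /andP[xa xb]; exact: h x xa xb.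
Qed.
Arguments disjointP {U A B}.

Section Upper.
Variables (n p : nat) (T : {set {set 'I_n}}).
Hypothesis Tconn : connected T.
Hypothesis Hyp : forall (m : nat) (H : {set {set 'I_m}}),
      (n <= m)%N -> @in_Ex _ m T H -> connected H -> (maxdeg H <= n - 4)%N.
Variable E : {set {set 'I_p}}.
Hypothesis gE : is_graph E.
Hypothesis fE : ~~ contains T E.
Hypothesis mE : forall E' : {set {set 'I_p}}, is_graph E' -> ~~ contains T E' -> #|E'| <= #|E|.

Lemma conn_const (W : finType) (g : 'I_n -> W) (P : pred W) :
  (forall a b, adj T a b -> P (g a) = P (g b)) -> forall a b, P (g a) = P (g b).
Proof.
move=> cl a b.
have := @closed_connect _ (adj T) [pred x | P (g x)] _ a b.
apply; last by move/forallP: Tconn => /(_ a)/forallP/(_ b).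
by move=> u v uv; rewrite !inE; exact: cl.
Qed.

Lemma deg_small x : deg E x < #|comp E x|.
Proof.
rewrite /deg [#|comp E x|](cardsD1 x) comp_refl add1n ltnS; apply: subset_leq_card.
apply/subsetP => y; rewrite !inE => a; case/andP: (a) => xy _.
by rewrite eq_sym xy /=; exact: connect1 a.
Qed.

Lemma deg_big x : n <= #|comp E x| -> deg E x <= n - 4.
Proof.
move=> big.
set C := comp E x.
have xC : x \in C := comp_refl E x.
pose h : 'I_#|C| -> 'I_p := enum_val.
pose rk u := if u \in C then enum_rank_in xC u else enum_rank_in xC x.
have hC i : h i \in C by exact: enum_valP.
have hinj : injective h by exact: enum_val_inj.
have hK i : rk (h i) = i by rewrite /rk hC; exact: enum_valK_in.
have rkK u : u \in C -> h (rk u) = u by move=> uC; rewrite /rk uC; exact: enum_rankK_in.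
have Cclosed u v : adj E u v -> (u \in C) = (v \in C).
  move=> auv; apply/idP/idP => h1; first exact: comp_adj h1 auv.
  by apply: comp_adj h1 _; rewrite adjC.
pose H := pull h E.
have gH : is_graph H by exact: graph_pull.
have fH : ~~ contains T H.
  apply/negP => /(contains_comp hinj) c; apply: (negP fE); apply: c => a b.
  by rewrite adj_pull.
have cH : connected H.
  apply/forallP => a; apply/forallP => b.
  have step u v : adj E u v -> connect (adj H) (rk u) (rk v).
    move=> auv; case uC: (u \in C).
      have vC : v \in C by rewrite -(Cclosed _ _ auv).
      by apply: connect1; rewrite adj_pull // !rkK.
    have vC : (v \in C) = false by rewrite -(Cclosed _ _ auv).
    by rewrite /rk uC vC connect0.
  have cm u v : connect (adj E) u v -> connect (adj H) (rk u) (rk v).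
    move=> /connectP [s ps ->]; elim: s u ps => [|w s IH] u /=.
      by move=> _; exact: connect0.
    case/andP => auw /IH; exact: connect_trans (step _ _ auw).
  have: connect (adj E) (h a) (h b).
    have := hC a; have := hC b; rewrite !inE => cb ca.
    rewrite connect_symE in ca; exact: connect_trans ca cb.
  by move/cm; rewrite !hK.
have dH : deg E x = deg H (rk x).
  rewrite /deg -[in RHS](card_imset _ hinj); apply: eq_card => y; rewrite !inE.
  apply/idP/imsetP.
    move=> axy; have yC : y \in C by exact: comp_adj xC axy.
    by exists (rk y); rewrite ?inE ?adj_pull ?rkK.
  by case=> b; rewrite inE adj_pull // rkK // => ab ->.
have exH : #|H| == ex #|C| T.
  rewrite eqn_leq; apply/andP; split.
    by rewrite /ex; apply: (leq_bigmax_cond H); rewrite gH fH.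
  apply/bigmax_leqP => F /andP[gF fF]; rewrite leqNgt; apply/negP => ltHF.
  pose Eout := [set e in E | [disjoint e & C]].
  pose PF := [set h @: f | f : {set 'I_#|C|} in F].
  pose E' := Eout :|: PF.
  have sub : E \subset Eout :|: [set h @: f | f : {set 'I_#|C|} in H].
    apply/subsetP => e eE.
    move: (gE) => /forall_inP/(_ e eE)/cards2P[a [b [ab eab]]].
    have adjab : adj E a b by rewrite /adj ab -eab eE.
    rewrite inE; case aC: (a \in C).
      have bC : b \in C by rewrite -(Cclosed _ _ adjab).
      apply/orP; right; apply/imsetP; exists [set rk a; rk b].
        by rewrite inE imsetU1 imset_set1 !rkK // -eab.
      by rewrite imsetU1 imset_set1 !rkK.
    apply/orP; left; rewrite inE eE /= eab.
    apply/disjointP => y; rewrite !in_set2 => /orP[/eqP->|/eqP->]; rewrite ?aC //.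
    by rewrite -(Cclosed _ _ adjab) aC.
  have cE : #|E| <= #|Eout| + #|H|.
    apply: (leq_trans (subset_leq_card sub)); rewrite cardsU.
    apply: (leq_trans (leq_subr _ _)); rewrite leq_add2l; exact: leq_imset_card.
  have cE' : #|E'| = #|Eout| + #|F|.
    rewrite cardsU (card_imset _ (imset_inj hinj)).
    suff -> : Eout :&: PF = set0 by rewrite cards0 subn0.
    apply/eqP; rewrite -subset0; apply/subsetP => e; rewrite !inE.
    case/andP => /andP[_ dis] /imsetP[f fF0 ef].
    move: (gF) => /forall_inP/(_ f fF0)/cards2P[a [b [ab eab]]].
    have: h a \in e by rewrite ef; apply/imsetP; exists a; rewrite // eab !inE eqxx.
    by move=> hae; case: ((elimT disjointP dis) _ hae (hC a)).
  have gE' : is_graph E'.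
    apply/forall_inP => e; rewrite inE => /orP[|/imsetP[f fF1 ->]].
      by rewrite inE => /andP[eE _]; move/forall_inP: gE; apply.
    by rewrite card_imset //; move/forall_inP: gF; apply.
  have fE' : ~~ contains T E'.
    apply/negP => /existsP [g /andP[/injectiveP gi /forallP ga]].
    have ga' a b : adj T a b -> adj E' (g a) (g b).
      by move=> tab; move: (ga a) => /forallP/(_ b)/implyP; apply.
    have inC u v : adj E' u v -> (u \in C) = (v \in C).
      case/andP => uv; rewrite inE => /orP[].
        rewrite inE => /andP[_ dis].
        have nu : u \notin C.
          by apply/negP => uC; apply: ((elimT disjointP dis) u) => //; rewrite !inE eqxx.
        have nv : v \notin C.
          by apply/negP => vC; apply: ((elimT disjointP dis) v) => //; rewrite !inE eqxx orbT.
        by rewrite (negbTE nu) (negbTE nv).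
      case/imsetP => f _ ef.
      have: u \in h @: f by rewrite -ef !inE eqxx.
      have: v \in h @: f by rewrite -ef !inE eqxx orbT.
      by case/imsetP => a' _ -> /imsetP[b' _ ->]; rewrite !hC.
    have const := @conn_const _ g (fun u => u \in C) (fun a b t => inC _ _ (ga' a b t)).
    case: (boolP [exists a, g a \in C]) => [/existsP[a0 ga0]|none].
      have gC a : g a \in C by rewrite (const a a0).
      apply: (negP fF); apply/existsP; exists [ffun a => rk (g a)]; apply/andP; split.
        apply/injectiveP => a b; rewrite !ffunE => e; apply: gi.
        by rewrite -(rkK _ (gC a)) e rkK.
      apply/forallP => a; apply/forallP => b; apply/implyP => tab; rewrite !ffunE.
      have := ga' a b tab; rewrite /adj => /andP[gab]; rewrite inE => /orP[].
        rewrite inE => /andP[_ dis].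
        by case: ((elimT disjointP dis) (g a) _ (gC a)); rewrite !inE eqxx.
      case/imsetP => f fF2 ef.
      have: h @: [set rk (g a); rk (g b)] = h @: f by rewrite imsetU1 imset_set1 !rkK.
      move/(imset_inj hinj) => ->; rewrite fF2 andbT.
      by apply: contra gab => /eqP e; rewrite -(rkK _ (gC a)) e rkK.
    apply: (negP fE); apply/existsP; exists g; apply/andP; split.
      exact/injectiveP.
    apply/forallP => a; apply/forallP => b; apply/implyP => tab.
    have := ga' a b tab; rewrite /adj => /andP[gab]; rewrite inE => /orP[].
      by rewrite inE gab => /andP[-> _].
    case/imsetP => f _ ef.
    have: g a \in h @: f by rewrite -ef !inE eqxx.
    case/imsetP => a' _ e'; case/negP: none; apply/existsP; exists a.
    by rewrite e' hC.
  have := mE gE' fE'; rewrite cE' => h1.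
  by have := leq_trans h1 cE; rewrite leq_add2l leqNgt ltHF.
have := Hyp big _ cH; rewrite /in_Ex gH fH exH => /(_ isT).
by rewrite dH; apply: leq_trans; apply: (leq_bigmax (F := deg H)).
Qed.
End Upper.


Lemma sum_shift a r (f : nat -> nat) :
  \sum_(a <= i < a + r) f i = \sum_(0 <= i < r) f (a + i).
Proof.
rewrite -{1}(add0n a) big_addn addKn; apply: eq_bigr => i _; by rewrite addnC.
Qed.

Lemma sum_split d k r (f : nat -> nat) :
  \sum_(0 <= i < k*d + r) f i =
  \sum_(j < k) \sum_(0 <= i < d) f (j*d + i) + \sum_(0 <= i < r) f (k*d + i).
Proof.
rewrite (@big_cat_nat _ _ _ (k*d)) //=; last exact: leq_addr.
rewrite sum_shift; congr (_ + _).
elim: k => [|k IH]; first by rewrite big_geq // big_ord0.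
rewrite big_ord_recr /= -IH mulSn addnC (@big_cat_nat _ _ _ (k*d)) //=; last exact: leq_addr.
by rewrite sum_shift.
Qed.

Lemma sum_eq_lt (k q : nat) : \sum_(j < k) ((j : nat) == q : nat) = (q < k).
Proof.
elim: k => [|k IH]; first by rewrite big_ord0.
rewrite big_ord_recr /= IH ltnS.
by case: (ltngtP q k).
Qed.

Lemma card_pred (U : finType) (P : pred U) : #|[set u | P u]| = \sum_u (P u : nat).
Proof.
rewrite -sum1_card (eq_bigl P); last by move=> u; rewrite inE.
rewrite big_mkcond; apply: eq_bigr => u _; by case: (P u).
Qed.

Section Block.
Variables (d k r : nat).
Hypothesis d0 : 0 < d.
Hypothesis rd : r < d.

Lemma sum_ord_nat (f : nat -> nat) : \sum_(u < k*d+r) f u = \sum_(0 <= i < k*d+r) f i.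
Proof. by rewrite big_mkord. Qed.

Lemma block_sum (F : nat -> nat) :
  \sum_(0 <= i < k*d + r) F (i %/ d) = k * (d * F 0) * 0 + \sum_(j < k) d * F j + r * F k.
Proof.
rewrite sum_split muln0 add0n; congr (_ + _).
  apply: eq_bigr => j _; rewrite -[in RHS](subn0 d) -sum_nat_const_nat.
  apply: eq_big_nat => i /andP[_ id]; by rewrite divnMDl // divn_small // addn0.
rewrite -[in RHS](subn0 r) -sum_nat_const_nat.
apply: eq_big_nat => i /andP[_ ir]; rewrite divnMDl // divn_small ?addn0 //.
exact: ltn_trans ir rd.
Qed.

Lemma card_block q : #|[set u : 'I_(k*d+r) | (u : nat) %/ d == q]| = d * (q < k) + r * (k == q).
Proof.
rewrite card_pred (sum_ord_nat (fun i => (i %/ d == q : nat))) (block_sum (fun j => (j == q : nat))) muln0 add0n.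
rewrite -big_distrr /= sum_eq_lt; by rewrite eq_sym.
Qed.
End Block.
Section Block2.
Variables (d k r n : nat) (T : {set {set 'I_n}}).
Hypothesis d0 : 0 < d.
Hypothesis rd : r < d.
Hypothesis nd : n = d.+1.
Hypothesis Tconn : connected T.

Definition B : {set {set 'I_(k*d+r)}} :=
  [set e : {set 'I_(k*d+r)} | (#|e| == 2) &&
     [forall x in e, forall y in e, (x : nat) %/ d == (y : nat) %/ d]].

Lemma adjB x y : adj B x y = (x != y) && ((x : nat) %/ d == (y : nat) %/ d).
Proof.
rewrite /adj inE cards2; case: (x =P y) => //= _.
apply/forall_inP/idP.
  by move/(_ x (set21 x y))/forall_inP/(_ y (set22 x y)).
move=> h u; rewrite !inE => /orP[]/eqP-> ; apply/forall_inP => v;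
  rewrite !inE => /orP[]/eqP-> //; by rewrite eq_sym.
Qed.

Lemma graphB : is_graph B.
Proof. by apply/forall_inP => e; rewrite inE => /andP[]. Qed.

Lemma freeB : ~~ contains T B.
Proof.
apply/negP => /existsP [g /andP[/injectiveP gi /forallP ga]].
have ga' a b : adj T a b -> adj B (g a) (g b).
  by move=> tab; move: (ga a) => /forallP/(_ b)/implyP; apply.
have n0 : 0 < n by rewrite nd.
pose a0 : 'I_n := Ordinal n0.
pose q := (g a0 : nat) %/ d.
have allq a : (g a : nat) %/ d == q.
  have cl a1 b1 : adj T a1 b1 -> ((g a1 : nat) %/ d == q) = ((g b1 : nat) %/ d == q).
    move=> tab; have := ga' a1 b1 tab; rewrite adjB => /andP[_ /eqP ->] //.
  have := @conn_const n T Tconn _ g (fun u : 'I_(k*d+r) => (u : nat) %/ d == q) cl a a0.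
  by move=> /= ->.
have: #|[set g a | a in 'I_n]| <= #|[set u : 'I_(k*d+r) | (u : nat) %/ d == q]|.
  apply: subset_leq_card; apply/subsetP => u /imsetP[a _ ->]; by rewrite inE allq.
rewrite card_imset // card_ord card_block //.
by case: (ltngtP q k) => h /=; rewrite ?muln1 ?muln0 ?addn0 ?add0n; lia.
Qed.

Lemma degB x : deg B x = d * ((x : nat) %/ d < k) + r * (k == (x : nat) %/ d) - 1.
Proof.
rewrite -card_block // (cardsD1 x) inE eqxx add1n subn1 /=.
rewrite /deg; apply: eq_card => y; rewrite !inE adjB; by rewrite eq_sym [_ == (x : nat) %/ d]eq_sym.
Qed.

Lemma edgesB : 2 * #|B| = k * (d * (d - 1)) + r * (r - 1).
Proof.
rewrite -handshake; last exact: graphB.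
under eq_bigr => x _ do rewrite degB.
rewrite (@sum_ord_nat d k r (fun i => d * (i %/ d < k) + r * (k == i %/ d) - 1)).
rewrite (@block_sum d k r d0 rd (fun j => d * (j < k) + r * (k == j) - 1)) // muln0 add0n.
rewrite ltnn eqxx muln0 add0n muln1; congr (_ + _).
rewrite (eq_bigr (fun _ => d * (d - 1))); first by rewrite sum_nat_const card_ord.
move=> j _; rewrite ltn_ord muln1.
by rewrite (_ : (k == j) = false) ?muln0 ?addn0 //; apply/negbTE; rewrite neq_ltn ltn_ord orbT.
Qed.
End Block2.


Lemma final_arith d k r L X : 9 <= d -> r < d -> (L == 0) || (d < L) -> L <= k*d + r ->
  ((k*d + r - L) %% d) * (d - (k*d+r-L) %% d) + 2*L <= X -> (2*(d+r) <= X) \/ (r*(d-r) <= X).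
Proof.
move=> d9 rd /orP[/eqP->|dL] Lp H.
  by move: H; rewrite subn0 modnMDl modn_small // muln0 addn0 => h; right.
case: (leqP (d + r) L) => h.
  left; apply: (leq_trans _ H); apply: (leq_trans _ (leq_addl _ _)).
  by rewrite leq_mul2l h orbT.
have k1 : 0 < k.
  case: (posnP k) => [k0|//]; move: Lp; rewrite k0 mul0n add0n; lia.
have e : k*d + r - L = (k-1)*d + (r - (L - d)) by rewrite mulnBl mul1n; nia.
move: H; rewrite e modnMDl modn_small; last lia.
move=> H; left.
have : 2 * (r - (L - d)) <= (r - (L - d)) * (d - (r - (L - d))).
  by rewrite mulnC leq_mul2l; apply/orP; right; lia.
move: H; generalize ((r - (L - d)) * (d - (r - (L - d)))) => t; lia.
Qed.

Local Open Scope ring_scope.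
Lemma int_final (n k r e X : nat) : (10 <= n)%N -> (r <= n - 2)%N ->
  (k * ((n - 1) * (n - 1 - 1)) + r * (r - 1) <= 2 * e)%N ->
  (2 * e + X <= (n - 2) * (k * (n - 1) + r))%N ->
  (2 * ((n - 1) + r) <= X)%N \/ (r * ((n - 1) - r) <= X)%N ->
  let p := (k * (n - 1) + r)%N in
  let lhs : int := (n%:Z - 2) * p%:Z - r%:Z * (n%:Z - 1 - r%:Z) in
  [/\ lhs <= 2 * e%:Z,
      2 * e%:Z <= (n%:Z - 2) * p%:Z
                  - Num.min (2 * (n%:Z - 1 + r%:Z)) (r%:Z * (n%:Z - 1 - r%:Z))
    & r \in [:: 0; 1; 2; n - 5; n - 4; n - 3; n - 2]%N -> 2 * e%:Z = lhs].
Proof.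
move=> n10 rn lo up mn.
have [s nrs] : exists s, n = (r + s + 2)%N by exists (n - 2 - r)%N; lia.
subst n.
have E1 : (r + s + 2 - 1 = r + s + 1)%N by lia.
have E2 : (r + s + 2 - 1 - 1 = r + s)%N by lia.
have E3 : (r + s + 2 - 1 - r = s + 1)%N by lia.
have E4 : (r + s + 2 - 2 = r + s)%N by lia.
move=> p lhs; rewrite /lhs /p.
rewrite ?E2 ?E3 ?E4 ?E1 in lo up mn *.
rewrite !PoszD !PoszM.
split.
- clear -lo; case: r lo => [|t] lo; lia.
- have hm : Num.min (2 * ((r + s + 2)%:Z - 1 + r%:Z)) (r%:Z * ((r + s + 2)%:Z - 1 - r%:Z)) <= X%:Z.
    rewrite ge_min; case: mn => h; apply/orP; [left|right]; lia.
  move: hm; rewrite !PoszD.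
  generalize (Num.min (2 * (r%:Z + s%:Z + 2%:Z - 1 + r%:Z)) (r%:Z * (r%:Z + s%:Z + 2%:Z - 1 - r%:Z))) => M hm.
  clear -up hm; lia.
- rewrite !inE => hr.
  have gr : (r * (s + 1) <= 2 * (r + s + 1 + r))%N.
    clear -hr n10; move: hr => /orP[/eqP h|/orP[/eqP h|/orP[/eqP h|/orP[/eqP h|/orP[/eqP h|/orP[/eqP h|/eqP h]]]]]];
    first [subst r; lia | assert (hs : s = 3) by lia; subst s; lia | assert (hs : s = 2) by lia; subst s; lia
          | assert (hs : s = 1) by lia; subst s; lia | assert (hs : s = 0) by lia; subst s; lia].
  have gX : (r * (s + 1) <= X)%N by case: mn => h; lia.
  clear -lo up gX; case: r lo up gX => [|t] lo up gX; lia.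
Qed.


Unset Implicit Arguments. Set Strict Implicit.
Local Open Scope ring_scope.

Theorem lemma2p8 (n : nat) (T : {set {set 'I_n}}) :
  (10 <= n)%N ->
  is_graph T -> is_tree T -> maxdeg T = (n - 4)%N ->
  (forall (m : nat) (H : {set {set 'I_m}}),
      (n <= m)%N -> @in_Ex _ m T H -> connected H -> (maxdeg H <= n - 4)%N) ->
  forall p k r : nat,
    (r <= n - 2)%N -> p = (k * (n - 1) + r)%N -> (n - 1 <= p)%N ->
    let lhs : int := (n%:Z - 2) * p%:Z - r%:Z * (n%:Z - 1 - r%:Z) in
    [/\ lhs <= 2 * (@ex _ p T)%:Z,
        2 * (@ex _ p T)%:Z <= (n%:Z - 2) * p%:Z
                           - Num.min (2 * (n%:Z - 1 + r%:Z)) (r%:Z * (n%:Z - 1 - r%:Z))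
      & r \in [:: 0; 1; 2; n - 5; n - 4; n - 3; n - 2]%N -> 2 * (@ex _ p T)%:Z = lhs].
Proof.
move=> n10 gT [Tconn _] _ Hyp p k r hr hp _.
subst p.
have d0 : (0 < n - 1)%N by lia.
have rd : (r < n - 1)%N by lia.
have nd : n = (n - 1).+1 by lia.
pose P := fun E : {set {set 'I_(k * (n - 1) + r)}} => is_graph E && ~~ contains T E.
have PB : P (B (n - 1) k r) by rewrite /P graphB (freeB k d0 rd nd Tconn).
case: (@arg_maxnP _ (B (n - 1) k r) P (fun E => #|E|) PB) => E0 /andP[gE0 fE0] maxE0.
have mE : forall E' : {set {set 'I_(k * (n - 1) + r)}}, is_graph E' -> ~~ contains T E' -> (#|E'| <= #|E0|)%N.
  move=> E1 g f; have PE1 : P E1 by rewrite /P g f.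
  exact: (maxE0 E1 PE1).
have exE : ex (k * (n - 1) + r) T = #|E0|.
  apply/eqP; rewrite eqn_leq; apply/andP; split.
    by apply/bigmax_leqP => E' PE'; exact: maxE0.
  by apply: (leq_bigmax_cond E0); rewrite gE0 fE0.
rewrite exE.
have lo : (k * ((n - 1) * (n - 1 - 1)) + r * (r - 1) <= 2 * #|E0|)%N.
  rewrite -(edgesB k d0 rd) leq_mul2l /=; exact: mE (graphB _ _ _) (freeB k d0 rd nd Tconn).
have pt x : (deg E0 x + dd (n - 1) #|comp E0 x| <= n - 2)%N.
  rewrite /dd; case: ifP => h.
    have := deg_small E0 x; lia.
  have hb : (n <= #|comp E0 x|)%N by move/negbT: h; rewrite -ltnNge; lia.
  have := deg_big Tconn Hyp gE0 fE0 mE hb; lia.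
have up : (2 * #|E0| + \sum_x dd (n - 1) #|comp E0 x| <= (n - 2) * (k * (n - 1) + r))%N.
  rewrite -(handshake gE0) -big_split /=.
  apply: (@leq_trans (\sum_(i < k * (n - 1) + r) (n - 2))).
    by apply: leq_sum => x _; exact: pt.
  by rewrite sum_nat_const card_ord mulnC.
have [L [L0 Lp HL]] := @comp_sum _ (n - 1) E0 setT d0 (fun _ _ _ _ => in_setT _).
have sT : (\sum_(x in [set: 'I_(k * (n - 1) + r)]) dd (n - 1) #|comp E0 x| =
           \sum_x dd (n - 1) #|comp E0 x|)%N.
  by apply: eq_bigl => x; rewrite in_setT.
rewrite sT cardsT card_ord in Lp HL.
have mn := final_arith (d := n - 1) (k := k) (r := r) (L := L) _ rd L0 Lp HL.
have := mn (ltac:(lia)).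
move=> mn'.
apply: (int_final (X := \sum_x dd (n - 1) #|comp E0 x|)) => //.
Qed.
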